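(* Let $G$ be an almost well-covered $\{C_3,C_4,C_5,C_7\}$-free graph. Then every vertex $x\in V(G_0)$ satisfies $d_{G_0}(x)\leq 2$.
   Context: All graphs are finite and simple. $C_n$ is the cycle on $n$ vertices; $G$ is $\{C_3,C_4,C_5,C_7\}$-free if it has no induced subgraph isomorphic to any of these cycles. $d_{G_0}(x)$ is the degree of $x$ in $G_0$. For a graph $G$, $\alpha(G)$ is the maximum size of an independent set and $i(G)$ the minimum size of an inclusion-maximal independent set; $G$ is almost well-covered if $\alpha(G)-i(G)=1$. Types of vertices: let $U$ be the set of vertices of $G$ whose connected component is a complete graph. In $G-U$, vertices of degree $1$ are leaves and the others are internal vertices. An internal vertex adjacent to exactly $k$ leaves is of type $k$; every vertex of $U$ is of type $0$. $G_0$ denotes the subgraph of $G$ induced by all vertices of type $0$. *)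

(* Defs.v *)
From mathcomp Require Import all_boot.
Set Implicit Arguments. Unset Strict Implicit. Unset Printing Implicit Defensive.

Section Graphs.
Variables (T : finType) (e : rel T).

Definition simple_graph : Prop := symmetric e /\ irreflexive e.

Definition cyc_adj (n : nat) (i j : 'I_n) : bool :=
  (i.+1 %% n == j) || (j.+1 %% n == i).

Definition has_induced_cycle (n : nat) : Prop :=
  exists f : 'I_n -> T, injective f /\ forall i j, e (f i) (f j) = cyc_adj i j.

Definition C3457_free : Prop :=
  ~ has_induced_cycle 3 /\ ~ has_induced_cycle 4 /\
  ~ has_induced_cycle 5 /\ ~ has_induced_cycle 7.

Definition independent (S : {set T}) : bool :=
  [forall x in S, forall y in S, ~~ e x y].

Definition maximal_independent (S : {set T}) : bool :=
  independent S && [forall v, (v \notin S) ==> ~~ independent (v |: S)].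

Definition alpha : nat := \max_(S : {set T} | independent S) #|S|.
Definition indep_dom : nat :=
  \big[minn/#|T|]_(S : {set T} | maximal_independent S) #|S|.

Definition almost_well_covered : Prop := alpha - indep_dom = 1.

Definition component (x : T) : {set T} := [set y | connect e x y].

Definition U : {set T} :=
  [set x | [forall y in component x, forall z in component x,
             (y != z) ==> e y z]].

Definition deg_GU (v : T) : nat := #|[set w | e v w & w \notin U]|.

Definition leaf (v : T) : bool := (v \notin U) && (deg_GU v == 1).
Definition internal (v : T) : bool := (v \notin U) && (deg_GU v != 1).

Definition nleaves (v : T) : nat := #|[set w | e v w & leaf w]|.

Definition has_type (k : nat) (v : T) : bool :=
  (v \in U) && (k == 0) || internal v && (nleaves v == k).

Definition V0 : {set T} := [set v | has_type 0 v].

Definition deg_G0 (x : T) : nat := #|[set y in V0 | e x y]|.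

End Graphs.

(* Main.v *)
Require Import Defs.
From mathcomp Require Import all_boot.
From mathcomp Require Import zify.
Set Implicit Arguments. Unset Strict Implicit. Unset Printing Implicit Defensive.

Section L.
Variables (T : finType) (e : rel T).
Hypothesis sym : symmetric e.
Hypothesis irr : irreflexive e.

Ltac conflict := match goal with
 | H : is_true (e ?p ?p) |- _ => by rewrite irr in H
 | H : is_true (?p != ?p) |- _ => by rewrite eqxx in H
 | H : is_true (e ?p ?q), H' : is_true (~~ e ?p ?q) |- _ => by rewrite H in H'
 | H : is_true (e ?p ?q), H' : is_true (~~ e ?q ?p) |- _ => by rewrite sym H in H'
 end.

Ltac pairs := first [ done | by rewrite irr | by rewrite sym
   | by apply/negbTE | by rewrite sym; apply/negbTE ].

Ltac distinct := rewrite /= !inE ?negb_or; repeat (apply/andP; split);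
   apply/negP => /eqP E; subst; conflict.

Lemma mk_cycle n (s : seq T) x0 : size s = n -> uniq s ->
  (forall i j : 'I_n, e (nth x0 s i) (nth x0 s j) = cyc_adj i j) -> has_induced_cycle e n.
Proof.
move=> Hs Hu H; exists (fun i : 'I_n => nth x0 s i); split=> // i j /eqP.
rewrite nth_uniq ?Hs // => /eqP; exact: val_inj.
Qed.

Lemma no_tri a b c : ~ has_induced_cycle e 3 -> e a b -> e b c -> e a c -> False.
Proof.
move=> N ab bc ac; apply: N; apply: (@mk_cycle 3 [:: a; b; c] a) => //.
  by distinct.
by move=> [[|[|[|m]]] Hm] [[|[|[|k]]] Hk] //; rewrite /cyc_adj /=; pairs.
Qed.

Lemma common2 a b c d : ~ has_induced_cycle e 3 -> ~ has_induced_cycle e 4 ->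
  e a c -> e a d -> e b c -> e b d -> a != b -> c != d -> False.
Proof.
move=> N3 N ac ad bc bd nab ncd.
have nab' : ~~ e a b by apply/negP => ab; exact: (no_tri N3 ab bc ac).
have ncd' : ~~ e c d by apply/negP => Hcd; by apply: (@no_tri c d a N3 Hcd); rewrite sym.
apply: N; apply: (@mk_cycle 4 [:: a; c; b; d] a) => //.
  by distinct.
by move=> [[|[|[|[|m]]]] Hm] [[|[|[|[|k]]]] Hk] //; rewrite /cyc_adj /=; pairs.
Qed.

Lemma c5 a b c d f : ~ has_induced_cycle e 5 ->
  e a b -> e b c -> e c d -> e d f -> e f a ->
  ~~ e a c -> ~~ e a d -> ~~ e b d -> ~~ e b f -> ~~ e c f -> False.
Proof.
move=> N ab bc Hcd df fa ac ad bd bf cf.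
apply: N; apply: (@mk_cycle 5 [:: a; b; c; d; f] a) => //.
  by distinct.
by move=> [[|[|[|[|[|m]]]]] Hm] [[|[|[|[|[|k]]]]] Hk] //; rewrite /cyc_adj /=; pairs.
Qed.

Lemma c7 a b c d f g h : ~ has_induced_cycle e 7 ->
  e a b -> e b c -> e c d -> e d f -> e f g -> e g h -> e h a ->
  ~~ e a c -> ~~ e a d -> ~~ e a f -> ~~ e a g ->
  ~~ e b d -> ~~ e b f -> ~~ e b g -> ~~ e b h ->
  ~~ e c f -> ~~ e c g -> ~~ e c h ->
  ~~ e d g -> ~~ e d h -> ~~ e f h -> False.
Proof.
move=> N ab bc Hcd df fg gh ha ac ad af ag bd bf bg bh cf cg ch dg dh fh.
apply: N; apply: (@mk_cycle 7 [:: a; b; c; d; f; g; h] a) => //.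
  by distinct.
by move=> [[|[|[|[|[|[|[|m]]]]]]] Hm] [[|[|[|[|[|[|[|k]]]]]]] Hk] //; rewrite /cyc_adj /=; pairs.
Qed.
End L.

Lemma bigmin_le (I : eqType) (r : seq I) (P : pred I) (F : I -> nat) m j :
  j \in r -> P j -> \big[minn/m]_(i <- r | P i) F i <= F j.
Proof.
elim: r => // a r IH; rewrite inE big_cons => /orP[/eqP ->|jr] Pj.
  by rewrite Pj geq_minl.
case: ifP => _; last exact: IH.
by rewrite geq_min IH ?orbT.
Qed.

Lemma notU (T : finType) (e : rel T) (v a c : T) :
  connect e v a -> connect e v c -> a != c -> ~~ e a c -> v \notin U e.
Proof.
move=> va vc ac nac; apply/negP; rewrite /U /component inE => /forallP/(_ a)/implyP.
rewrite inE => /(_ va)/forallP/(_ c)/implyP; rewrite inE => /(_ vc)/implyP/(_ ac).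
by rewrite (negbTE nac).
Qed.

Lemma ar1 a b : 2 < a -> true + b + 2 <= a + b.
Proof. move=> /= h; lia. Qed.

Lemma ar2 a i b : a - i = 1 -> b + 2 <= a -> i <= b -> False.
Proof. lia. Qed.

Theorem lemma19 (T : finType) (e : rel T) :
  simple_graph e -> almost_well_covered e -> C3457_free e ->
  forall x : T, x \in V0 e -> deg_G0 e x <= 2.
Proof.
move=> [sym irr] awc [N3 [N4 [N5 N7]]] x x0.
have tri := no_tri sym irr N3.
have com2 := common2 sym irr N3 N4.
have cy5 := c5 sym irr N5.
have cy7 := c7 sym irr N7.
have esym : forall a b, e a b -> e b a by move=> a b; rewrite sym.
have c1 : forall a b, e a b -> connect e a b by move=> a b h; exact: connect1.
rewrite leqNgt; apply/negP => /card_gt2P [y1 [y2 [y3 [[Y1 Y2 Y3] [n12 n23 n31]]]]].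
move: Y1 Y2 Y3; rewrite !inE => /andP[V1 x1] /andP[V2 x2] /andP[V3 x3].
set Y := [set y1; y2; y3].
have hY : forall y, y \in Y -> e x y && (y \in V0 e).
  by move=> y; rewrite !inE -orbA => /or3P[]/eqP->; apply/andP.
set NX := [set v | (v == x) || e x v].
set Z := [set z | (z != x) && [exists y in Y, e y z]].
set W := [set w | [exists z in Z, e z w] && (w \notin NX) && (w \notin Z)].
have ZP : forall z, z \in Z -> z != x /\ exists2 y, y \in Y & e y z.
  move=> z; rewrite inE => /andP[-> /existsP[y /andP[yY yz]]]; split=> //; by exists y.
have F1 : forall z, z \in Z -> ~~ e x z.
  move=> z /ZP [_ [y yY yz]]; apply/negP => xz.
  have /andP[xy _] := hY y yY; exact: (tri x y z).
have F1' : forall z y y', z \in Z -> y \in Y -> e y z -> e x y' -> e y' z -> y' = y.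
  move=> z y y' Zz yY yz xy' y'z; apply/eqP; apply/negPn/negP => ne.
  have /andP[xy _] := hY y yY.
  have [zx _] := ZP z Zz.
  by apply: (com2 x z y' y xy' xy (esym _ _ y'z) (esym _ _ yz)); rewrite // eq_sym.
have F2 : forall z z', z \in Z -> z' \in Z -> ~~ e z z'.
  move=> z z' Zz Zz'; apply/negP => zz'.
  have [_ [y yY yz]] := ZP z Zz; have [_ [y' y'Y y'z']] := ZP z' Zz'.
  have /andP[xy _] := hY y yY; have /andP[xy' _] := hY y' y'Y.
  have [eyy|nyy] := eqVneq y y'.
    by subst y'; exact: (tri y z z' yz zz' y'z').
  apply: (cy5 x y z z' y' xy yz zz' (esym _ _ y'z') (esym _ _ xy') (F1 z Zz) (F1 z' Zz')).
  - apply/negP => yz''; by rewrite (F1' z' y' y Zz' y'Y y'z' xy yz'') eqxx in nyy.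
  - by apply/negP => yy'; exact: (tri x y y' xy yy' xy').
  - apply/negP => zy'; by rewrite (F1' z y y' Zz yY yz xy' (esym _ _ zy')) eqxx in nyy.
have F3 : forall z, z \in Z -> exists2 w, w \in W & e z w.
  move=> z Zz; have [zx [y yY yz]] := ZP z Zz.
  have /andP[xy yV] := hY y yY.
  have xz := F1 z Zz.
  have yU : y \notin U e.
    by apply: (notU (a := x) (c := z)); [exact: c1 (esym _ _ xy) | exact: c1 | rewrite eq_sym |].
  have zU : z \notin U e.
    apply: (notU (a := x) (c := z)) => //; last by rewrite eq_sym.
    exact: connect_trans (c1 _ _ (esym _ _ yz)) (c1 _ _ (esym _ _ xy)).
  move: yV; rewrite inE /has_type (negbTE yU) /= => /andP[_ nl].
  have zleaf : ~~ leaf e z.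
    by apply/negP => lz; move: nl; rewrite /nleaves (cardD1 z) inE yz lz.
  move: zleaf; rewrite /leaf zU /= => d1.
  have : 1 < deg_GU e z.
    rewrite ltn_neqAle eq_sym d1 /=; apply/card_gt0P; exists y.
    by rewrite inE (esym _ _ yz) yU.
  case/card_gt1P => [u [v [uS vS neq]]].
  have [w wS wy] : exists2 w, w \in [set w | e z w & w \notin U e] & w != y.
    by case: (eqVneq u y) => [E|]; [exists v; rewrite // -E eq_sym | exists u].
  move: wS; rewrite inE => /andP[zw _].
  exists w => //; rewrite inE; apply/andP; split; [apply/andP; split|].
  - by apply/existsP; exists z; rewrite Zz zw.
  - rewrite inE negb_or; apply/andP; split.
      by apply/negP => /eqP wx; move: xz; rewrite -wx (esym _ _ zw).
    apply/negP => xw.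
    by apply: (com2 x z y w xy xw (esym _ _ yz) zw); rewrite // eq_sym.
  - by apply/negP => Zw; move: (F2 z w Zz Zw); rewrite zw.
have WP : forall w, w \in W -> [/\ exists2 z, z \in Z & e z w, ~~ e x w, w != x & w \notin Z].
  move=> w; rewrite inE => /andP[/andP[/existsP[z /andP[Zz zw]]]]; rewrite inE negb_or.
  move=> /andP[wx xw] wZ; split=> //; by exists z.
have YW : forall y w, y \in Y -> w \in W -> ~~ e y w.
  move=> y w yY Ww; apply/negP => yw; have [_ _ wx wZ] := WP w Ww.
  move/negP: wZ; apply; rewrite inE wx /=; apply/existsP; exists y; by rewrite yY yw.
have F4 : forall w w', w \in W -> w' \in W -> ~~ e w w'.
  move=> w w' Ww Ww'; apply/negP => ww'.
  have [[z Zz zw] xw wx wZ] := WP w Ww; have [[z' Zz' z'w'] xw' w'x w'Z] := WP w' Ww'.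
  have [zeq|zne] := eqVneq z z'.
    by subst z'; exact: (tri z w w' zw ww' z'w').
  have [_ [y yY yz]] := ZP z Zz; have [_ [y' y'Y y'z']] := ZP z' Zz'.
  have /andP[xy _] := hY y yY; have /andP[xy' _] := hY y' y'Y.
  have nzw' : ~~ e z w' by apply/negP => zw'; exact: (tri z w w' zw ww' zw').
  have nwz' : ~~ e w z' by apply/negP => wz'; exact: (tri w w' z' ww' (esym _ _ z'w') wz').
  have [yeq|yne] := eqVneq y y'.
    subst y'.
    exact: (cy5 y z w w' z' yz zw ww' (esym _ _ z'w') (esym _ _ y'z')
              (YW y w yY Ww) (YW y w' yY Ww') nzw' (F2 z z' Zz Zz') nwz').
  apply: (cy7 x y z w w' z' y' xy yz zw ww' (esym _ _ z'w') (esym _ _ y'z') (esym _ _ xy')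
            (F1 z Zz) xw xw' (F1 z' Zz') (YW y w yY Ww) (YW y w' yY Ww') _ _
            nzw' (F2 z z' Zz Zz') _ nwz' _ _).
  - apply/negP => yz''; by rewrite (F1' z' y' y Zz' y'Y y'z' xy yz'') eqxx in yne.
  - by apply/negP => yy'; exact: (tri x y y' xy yy' xy').
  - apply/negP => zy'; by rewrite (F1' z y y' Zz yY yz xy' (esym _ _ zy')) eqxx in yne.
  - by rewrite sym; exact: YW.
  - by rewrite sym; exact: YW.
have Sind : independent e (x |: W).
  apply/forallP => u; apply/implyP => uS; apply/forallP => v; apply/implyP => vS.
  move: uS vS; rewrite !in_setU1 => /orP[/eqP->|uW] /orP[/eqP->|vW].
  - by rewrite irr.
  - by have [_ ? _ _] := WP v vW.
  - by have [_ ? _ _] := WP u uW; rewrite sym.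
  - exact: F4.
have [B /maxsetP [/andP[Bind _] Bmax] SB] :=
  @maxset_exists _ [pred B | independent e B && (x |: W \subset B)] (x |: W)
    (introT andP (conj Sind (subxx _))).
have Bi : forall u v, u \in B -> v \in B -> ~~ e u v.
  move=> u v uB vB; move/forallP/(_ u): Bind; rewrite uB /= => /forallP/(_ v).
  by rewrite vB.
have Bmaxind : maximal_independent e B.
  rewrite /maximal_independent Bind /=; apply/forallP => v; apply/implyP => vB.
  apply/negP => vind.
  have PvB : independent e (v |: B) && (x |: W \subset v |: B).
    by rewrite vind (subset_trans SB) ?subsetUr.
  have vBB := Bmax _ PvB (subsetUr _ _).
  by move: vB; rewrite -vBB setU11.
have xB : x \in B by apply: (subsetP SB); exact: setU11.
have WB : forall w, w \in W -> w \in B by move=> w Ww; apply: (subsetP SB); exact: setU1r.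
have BZ : forall z, z \in Z -> z \notin B.
  move=> z Zz; apply/negP => zB; have [w Ww zw] := F3 z Zz.
  by rewrite (negbTE (Bi z w zB (WB w Ww))) in zw.
have BY : forall y, y \in Y -> y \notin B.
  move=> y yY; apply/negP => yB; have /andP[xy _] := hY y yY.
  by rewrite (negbTE (Bi x y xB yB)) in xy.
have Aind : independent e (Y :|: (B :\ x)).
  have key : forall a b, a \in Y -> b \in B :\ x -> ~~ e a b.
    move=> a b aY; rewrite !inE => /andP[bx bB]; apply/negP => ab.
    have : b \in Z by rewrite inE bx /=; apply/existsP; exists a; rewrite aY ab.
    by move/BZ; rewrite bB.
  apply/forallP => u; apply/implyP => uA; apply/forallP => v; apply/implyP => vA.
  move: uA vA => /setUP[uY|uB] /setUP[vY|vB].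
  - apply/negP => uv; have /andP[xu _] := hY u uY; have /andP[xv _] := hY v vY.
    exact: (tri x u v xu uv xv).
  - exact: key.
  - rewrite sym; exact: key.
  - move: uB vB; rewrite !inE => /andP[_ uB] /andP[_ vB]; exact: Bi.
have cardY : 2 < #|Y|.
  apply/card_gt2P; exists y1, y2, y3; split; first by rewrite !inE !eqxx ?orbT.
  by split; rewrite // eq_sym.
have YBx : Y :&: (B :\ x) = set0.
  apply/setP => v; rewrite in_setI in_set0; apply/negP => /andP[vY].
  by rewrite in_setD1 => /andP[_ vB]; rewrite (negbTE (BY v vY)) in vB.
have HA : #|B| + 2 <= alpha e.
  apply: leq_trans (leq_bigmax_cond _ Aind).
  rewrite cardsU YBx cards0 subn0 (cardsD1 x B) xB.
  exact: ar1.
have HB : indep_dom e <= #|B|.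
  by apply: bigmin_le; [exact: mem_index_enum | exact: Bmaxind].
exact: (ar2 awc HA HB).
Qed.
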